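(* Let $m,n\in\mathbb{N}$ and let $s_{j,\ell}\in\mathbb{C}$ with $\Re(s_{j,\ell})>0$ for $1\le j\le n$, $1\le\ell\le m$. Then the $n\times n$ matrix \[ \left(\prod_{\ell=1}^{m}\left(1-2^{1-s_{j,\ell}-\overline{s_{k,\ell}}}\right)\Gamma(s_{j,\ell}+\overline{s_{k,\ell}})\zeta(s_{j,\ell}+\overline{s_{k,\ell}})\right)_{j,k=1}^{n} \] is positive semidefinite.
   Context: $\Gamma$ is Euler's Gamma function and $\zeta$ the Riemann zeta function; the product $(1-2^{1-s})\zeta(s)$ is understood as the entire function it defines (the singularity at $s=1$ is removable). A complex matrix $A=(a_{j,k})$ is positive semidefinite if $\sum_{j,k}a_{j,k}z_j\overline{z_k}\ge0$ for all complex $z_j$. *)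

(* Defs.v *)
From Stdlib Require Import Reals.
From Coquelicot Require Import Coquelicot.
Open Scope R_scope.

(* x^s for a real base x > 0 and complex exponent s: exp(s * ln x). *)
Definition cpow_pos (x : R) (s : C) : C :=
  (exp (Re s * ln x) * cos (Im s * ln x), exp (Re s * ln x) * sin (Im s * ln x)).

Definition cGamma (s : C) : C :=
  (RInt_gen (fun t => Re (cpow_pos t (Cminus s (RtoC 1))) * exp (- t))
            (at_right 0) (Rbar_locally p_infty),
   RInt_gen (fun t => Im (cpow_pos t (Cminus s (RtoC 1))) * exp (- t))
            (at_right 0) (Rbar_locally p_infty)).

(* The entire function (1 - 2^(1-s)) zeta(s), on Re s > 0, given by the
   (convergent) alternating Dirichlet series  sum_{k>=1} (-1)^(k-1) k^(-s). *)
Definition eta_zeta (s : C) : C :=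
  (Series (fun k => (-1) ^ k * Re (cpow_pos (INR (k + 1)) (Copp s))),
   Series (fun k => (-1) ^ k * Im (cpow_pos (INR (k + 1)) (Copp s)))).

Fixpoint sumC (n : nat) (f : nat -> C) : C :=
  match n with O => RtoC 0 | S p => Cplus (sumC p f) (f p) end.
Fixpoint prodC (n : nat) (f : nat -> C) : C :=
  match n with O => RtoC 1 | S p => Cmult (prodC p f) (f p) end.

Definition psd (n : nat) (A : nat -> nat -> C) : Prop :=
  forall z : nat -> C,
    let q := sumC n (fun j => sumC n (fun k => Cmult (Cmult (A j k) (z j)) (Cconj (z k)))) in
    Im q = 0 /\ 0 <= Re q.

(* Main.v *)
Require Import Defs.
From Stdlib Require Import Reals Lra Lia FunctionalExtensionality.
From Coquelicot Require Import Coquelicot.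
Open Scope R_scope.

Ltac cext := apply injective_projections; simpl; try ring.

Lemma sumC_ext n f g : (forall i, (i < n)%nat -> f i = g i) -> sumC n f = sumC n g.
Proof. induction n; intros H; simpl; auto. rewrite IHn by (intros; apply H; lia). rewrite H by lia. auto. Qed.

Lemma sumC_plus n f g : sumC n (fun i => Cplus (f i) (g i)) = Cplus (sumC n f) (sumC n g).
Proof. induction n; simpl. cext. rewrite IHn. cext. Qed.

Lemma sumC_mult_l n c f : sumC n (fun i => Cmult c (f i)) = Cmult c (sumC n f).
Proof. induction n; simpl. cext. rewrite IHn. cext. Qed.

Lemma sumC_mult_r n c f : sumC n (fun i => Cmult (f i) c) = Cmult (sumC n f) c.
Proof. induction n; simpl. cext. rewrite IHn. cext. Qed.

Lemma sumC_zero n : sumC n (fun _ => RtoC 0) = RtoC 0.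
Proof. induction n; simpl; auto. rewrite IHn. cext. Qed.

Lemma sumC_conj n f : Cconj (sumC n f) = sumC n (fun i => Cconj (f i)).
Proof. induction n; simpl. cext. rewrite <- IHn. cext. Qed.

Definition Q n (A : nat -> nat -> C) (z : nat -> C) :=
  sumC n (fun j => sumC n (fun k => Cmult (Cmult (A j k) (z j)) (Cconj (z k)))).

Lemma psd_iff n A : psd n A <-> forall z, Im (Q n A z) = 0 /\ 0 <= Re (Q n A z).
Proof. unfold psd, Q. split; auto. Qed.

Lemma psd_ext n A B : (forall j k, (j < n)%nat -> (k < n)%nat -> A j k = B j k) ->
  psd n A -> psd n B.
Proof.
  intros H HA. apply psd_iff. intros z. rewrite psd_iff in HA. specialize (HA z).
  replace (Q n B z) with (Q n A z); auto. unfold Q. apply sumC_ext. intros j Hj.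
  apply sumC_ext. intros k Hk. rewrite H; auto.
Qed.

Lemma psd_add n A B : psd n A -> psd n B -> psd n (fun j k => Cplus (A j k) (B j k)).
Proof.
  rewrite !psd_iff. intros HA HB z. specialize (HA z). specialize (HB z).
  replace (Q n (fun j k => Cplus (A j k) (B j k)) z) with (Cplus (Q n A z) (Q n B z)).
  { set (a := Q n A z) in *. set (b := Q n B z) in *. unfold Re, Im in *; simpl; lra. }
  unfold Q. rewrite <- sumC_plus. apply sumC_ext. intros j _.
  rewrite <- sumC_plus. apply sumC_ext. intros k _. cext.
Qed.

Lemma psd_zero n : psd n (fun _ _ => RtoC 0).
Proof.
  rewrite psd_iff. intros z.
  replace (Q n (fun _ _ => RtoC 0) z) with (RtoC 0). unfold Re, Im, RtoC; simpl; split; lra.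
  unfold Q. symmetry. rewrite (sumC_ext n _ (fun _ => RtoC 0)). apply sumC_zero.
  intros j _. rewrite (sumC_ext n _ (fun _ => RtoC 0)). apply sumC_zero.
  intros k _. cext.
Qed.

Lemma psd_sum n N (Cm : nat -> nat -> nat -> C) :
  (forall i, (i < N)%nat -> psd n (Cm i)) -> psd n (fun j k => sumC N (fun i => Cm i j k)).
Proof.
  induction N; intros H; simpl. apply psd_zero.
  apply psd_add. apply IHN; intros; apply H; lia. apply H; lia.
Qed.

Lemma psd_ones n : psd n (fun _ _ => RtoC 1).
Proof.
  rewrite psd_iff. intros z.
  replace (Q n (fun _ _ => RtoC 1) z) with (Cmult (sumC n z) (Cconj (sumC n z))).
  { set (a := sumC n z). unfold Re, Im; simpl. split. ring. nra. }
  unfold Q. rewrite <- sumC_mult_r. apply sumC_ext. intros j _.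
  rewrite sumC_conj, <- sumC_mult_l. apply sumC_ext. intros k _. cext.
Qed.

Lemma psd_rank1 n A v : psd n A -> psd n (fun j k => Cmult (A j k) (Cmult (v j) (Cconj (v k)))).
Proof.
  rewrite !psd_iff. intros HA z. specialize (HA (fun j => Cmult (v j) (z j))).
  replace (Q n _ z) with (Q n A (fun j => Cmult (v j) (z j))); auto.
  unfold Q. apply sumC_ext. intros j _. apply sumC_ext. intros k _. cext.
Qed.

Definition Ccvg {T} (F : (T -> Prop) -> Prop) (f : T -> C) (l : C) :=
  filterlim (fun x => Re (f x)) F (locally (Re l)) /\
  filterlim (fun x => Im (f x)) F (locally (Im l)).

Section Lims.
Context {T : Type} (F : (T -> Prop) -> Prop) {FF : Filter F}.

Lemma Rlim_plus (f g : T -> R) (a b : R) : filterlim f F (locally a) -> filterlim g F (locally b) ->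
  filterlim (fun x => f x + g x) F (locally (a + b)).
Proof. intros Hf Hg. eapply filterlim_comp_2; eauto. apply (filterlim_plus (K:=R_AbsRing) a b). Qed.

Lemma Rlim_mult (f g : T -> R) (a b : R) : filterlim f F (locally a) -> filterlim g F (locally b) ->
  filterlim (fun x => f x * g x) F (locally (a * b)).
Proof. intros Hf Hg. eapply filterlim_comp_2; eauto. apply (filterlim_mult (K:=R_AbsRing) a b). Qed.

Lemma Rlim_const (a : R) : filterlim (fun _ => a) F (locally a).
Proof. apply filterlim_const. Qed.

Lemma Rlim_opp (f : T -> R) (a : R) : filterlim f F (locally a) -> filterlim (fun x => - f x) F (locally (- a)).
Proof.
  intros Hf. replace (fun x => - f x) with (fun x => (-1) * f x) by (apply functional_extensionality; intros; ring).
  replace (-a) with ((-1)*a) by ring. apply Rlim_mult; auto. apply Rlim_const.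
Qed.

Lemma Rlim_minus (f g : T -> R) (a b : R) : filterlim f F (locally a) -> filterlim g F (locally b) ->
  filterlim (fun x => f x - g x) F (locally (a - b)).
Proof. intros. apply Rlim_plus; auto. apply Rlim_opp; auto. Qed.

Lemma Ccvg_const c : Ccvg F (fun _ => c) c.
Proof. split; apply Rlim_const. Qed.

Lemma Ccvg_plus f g a b : Ccvg F f a -> Ccvg F g b -> Ccvg F (fun x => Cplus (f x) (g x)) (Cplus a b).
Proof. intros [] []. split; simpl; apply Rlim_plus; auto. Qed.

Lemma Ccvg_mult f g a b : Ccvg F f a -> Ccvg F g b -> Ccvg F (fun x => Cmult (f x) (g x)) (Cmult a b).
Proof. intros [] []. split; simpl. apply Rlim_minus; apply Rlim_mult; auto.
  apply Rlim_plus; apply Rlim_mult; auto. Qed.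

Lemma Ccvg_minus f g a b : Ccvg F f a -> Ccvg F g b -> Ccvg F (fun x => Cminus (f x) (g x)) (Cminus a b).
Proof. intros [] []. split; simpl; apply Rlim_plus; auto; apply Rlim_opp; auto. Qed.

Lemma Ccvg_conj f a : Ccvg F f a -> Ccvg F (fun x => Cconj (f x)) (Cconj a).
Proof. intros []. split; simpl; auto. apply Rlim_opp; auto. Qed.

Lemma Ccvg_sumC N f l : (forall i, (i < N)%nat -> Ccvg F (fun x => f x i) (l i)) ->
  Ccvg F (fun x => sumC N (f x)) (sumC N l).
Proof.
  induction N; intros H; simpl. apply Ccvg_const.
  apply Ccvg_plus. apply IHN; intros; apply H; lia. apply H; lia.
Qed.

End Lims.

Lemma psd_lim {T} (F : (T -> Prop) -> Prop) {FF : ProperFilter F} n (B : T -> nat -> nat -> C) A :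
  F (fun x => psd n (B x)) ->
  (forall j k, (j < n)%nat -> (k < n)%nat -> Ccvg F (fun x => B x j k) (A j k)) ->
  psd n A.
Proof.
  intros HB HA. assert (FF0 : Filter F) by (destruct FF; auto). rewrite psd_iff. intros z.
  assert (Hc : Ccvg F (fun x => Q n (B x) z) (Q n A z)).
  { unfold Q. apply (Ccvg_sumC F n (fun x j => sumC n (fun k => Cmult (Cmult (B x j k) (z j)) (Cconj (z k))))).
    intros j Hj. apply (Ccvg_sumC F n (fun x k => Cmult (Cmult (B x j k) (z j)) (Cconj (z k)))).
    intros k Hk. cbv beta. apply (Ccvg_mult F (FF:=FF0)). apply (Ccvg_mult F (FF:=FF0)). apply HA; auto. apply (Ccvg_const F (FF:=FF0)). apply (Ccvg_const F (FF:=FF0)). }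
  destruct Hc as [H1 H2]. split.
  - assert (Hl1 := filterlim_le (F:=F) (fun _ => 0) (fun x => Im (Q n (B x) z)) 0 (Im (Q n A z))).
    assert (Hl2 := filterlim_le (F:=F) (fun x => Im (Q n (B x) z)) (fun _ => 0) (Im (Q n A z)) 0).
    simpl in Hl1, Hl2. apply Rle_antisym; [apply Hl2|apply Hl1]; auto;
    try (eapply filter_imp; [|exact HB]; intros x Hx; rewrite psd_iff in Hx; rewrite (proj1 (Hx z)); lra);
    apply filterlim_const.
  - assert (Hl := filterlim_le (F:=F) (fun _ => 0) (fun x => Re (Q n (B x) z)) 0 (Re (Q n A z))).
    simpl in Hl. apply Hl; auto.
    eapply filter_imp; [|exact HB]. intros x Hx. rewrite psd_iff in Hx. apply Hx.
    apply filterlim_const.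
Qed.


Lemma cpow_add x a b : cpow_pos x (Cplus a b) = Cmult (cpow_pos x a) (cpow_pos x b).
Proof.
  unfold cpow_pos, Cmult, Cplus, Re, Im; simpl.
  rewrite !Rmult_plus_distr_r, exp_plus, cos_plus, sin_plus. f_equal; ring.
Qed.

Lemma cpow_mul x y s : 0 < x -> 0 < y -> cpow_pos (x * y) s = Cmult (cpow_pos x s) (cpow_pos y s).
Proof.
  intros Hx Hy. unfold cpow_pos, Cmult, Re, Im; simpl.
  rewrite ln_mult by auto. rewrite !Rmult_plus_distr_l, exp_plus, cos_plus, sin_plus. f_equal; ring.
Qed.

Lemma cpow_conj x s : cpow_pos x (Cconj s) = Cconj (cpow_pos x s).
Proof.
  unfold cpow_pos, Cconj, Re, Im; simpl.
  replace (- snd s * ln x) with (- (snd s * ln x)) by ring. rewrite cos_neg, sin_neg. f_equal; ring.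
Qed.

Lemma cpow_real x r : cpow_pos x (RtoC r) = RtoC (Rpower x r).
Proof.
  unfold cpow_pos, RtoC, Re, Im, Rpower; simpl. rewrite Rmult_0_l, cos_0, sin_0. f_equal; ring.
Qed.

Lemma cpow_opp x s : Cmult (cpow_pos x (Copp s)) (cpow_pos x s) = RtoC 1.
Proof.
  rewrite <- cpow_add. replace (Cplus (Copp s) s) with (RtoC 0) by cext.
  rewrite cpow_real. unfold Rpower. rewrite Rmult_0_l, exp_0. auto.
Qed.

Lemma cpow_kernel y s t : 0 < y ->
  cpow_pos y (Cminus (Cplus s (Cconj t)) (RtoC 1)) =
  Cmult (RtoC (/ y)) (Cmult (cpow_pos y s) (Cconj (cpow_pos y t))).
Proof.
  intros Hy. unfold Cminus. rewrite !cpow_add, cpow_conj.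
  replace (Copp (RtoC 1)) with (RtoC (-1)) by cext.
  rewrite cpow_real. replace (Rpower y (-1)) with (/ y).
  cext.
  unfold Rpower. replace (-1 * ln y) with (- ln y) by ring. rewrite exp_Ropp, exp_ln; auto.
Qed.

Definition CisInt (f : R -> C) (a b : R) (l : C) :=
  is_RInt (fun x => Re (f x)) a b (Re l) /\ is_RInt (fun x => Im (f x)) a b (Im l).

Definition CInt (f : R -> C) (a b : R) : C :=
  (RInt (fun x => Re (f x)) a b, RInt (fun x => Im (f x)) a b).

Lemma CisInt_ext f g a b l : (forall x, Rmin a b < x < Rmax a b -> f x = g x) ->
  CisInt f a b l -> CisInt g a b l.
Proof.
  intros H [H1 H2]. split; eapply is_RInt_ext; eauto; intros x Hx; simpl; rewrite H; auto.
Qed.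

Lemma CisInt_plus f g a b lf lg : CisInt f a b lf -> CisInt g a b lg ->
  CisInt (fun x => Cplus (f x) (g x)) a b (Cplus lf lg).
Proof. intros [] []. split; apply (is_RInt_plus (V:=R_NormedModule)); auto. Qed.

Lemma CisInt_cmult c f a b l : CisInt f a b l -> CisInt (fun x => Cmult c (f x)) a b (Cmult c l).
Proof.
  intros [H1 H2]. split; simpl.
  - apply (is_RInt_minus (V:=R_NormedModule)); apply (is_RInt_scal (V:=R_NormedModule)); auto.
  - apply (is_RInt_plus (V:=R_NormedModule)); apply (is_RInt_scal (V:=R_NormedModule)); auto.
Qed.

Lemma CisInt_minus f g a b lf lg : CisInt f a b lf -> CisInt g a b lg ->
  CisInt (fun x => Cminus (f x) (g x)) a b (Cminus lf lg).
Proof. intros [] []. split; apply (is_RInt_minus (V:=R_NormedModule)); auto. Qed.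

Lemma CisInt_zero a b : CisInt (fun _ => RtoC 0) a b (RtoC 0).
Proof.
  assert (H0 := is_RInt_const (V:=R_NormedModule) a b 0).
  rewrite (scal_zero_r (V:=R_NormedModule)) in H0. split; exact H0.
Qed.

Lemma CisInt_sumC N (f : nat -> R -> C) a b l :
  (forall i, (i < N)%nat -> CisInt (f i) a b (l i)) ->
  CisInt (fun x => sumC N (fun i => f i x)) a b (sumC N l).
Proof.
  induction N; intros H; simpl. apply CisInt_zero.
  apply (CisInt_plus (fun x => sumC N (fun i => f i x)) (f N)).
  apply IHN; intros; apply H; lia. apply H; lia.
Qed.

Lemma CisInt_comp_lin f u a b l : CisInt f (u * a) (u * b) l ->
  CisInt (fun y => Cmult (RtoC u) (f (u * y))) a b l.
Proof.
  intros [H1 H2]. split.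
  - rewrite <- (Rplus_0_r (u*a)), <- (Rplus_0_r (u*b)) in H1.
    apply (is_RInt_comp_lin (V:=R_NormedModule)) in H1.
    eapply is_RInt_ext; [|exact H1]. intros x _. simpl. rewrite Rplus_0_r.
    change (scal u (Re (f (u * x)))) with (u * Re (f (u * x))). unfold Re. ring.
  - rewrite <- (Rplus_0_r (u*a)), <- (Rplus_0_r (u*b)) in H2.
    apply (is_RInt_comp_lin (V:=R_NormedModule)) in H2.
    eapply is_RInt_ext; [|exact H2]. intros x _. simpl. rewrite Rplus_0_r.
    change (scal u (Im (f (u * x)))) with (u * Im (f (u * x))). unfold Im. ring.
Qed.

Lemma CisInt_CInt f a b : ex_RInt (fun x => Re (f x)) a b -> ex_RInt (fun x => Im (f x)) a b ->
  CisInt f a b (CInt f a b).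
Proof. intros; split; apply (RInt_correct (V:=R_CompleteNormedModule)); auto. Qed.

Lemma psd_int n A (s : nat -> C) (g : R -> R) u v (L : nat -> nat -> C) :
  psd n A -> u <= v -> (forall y, u < y < v -> 0 <= g y) ->
  (forall j k, (j < n)%nat -> (k < n)%nat ->
     CisInt (fun y => Cmult (RtoC (g y)) (Cmult (cpow_pos y (s j)) (Cconj (cpow_pos y (s k))))) u v (L j k)) ->
  psd n (fun j k => Cmult (A j k) (L j k)).
Proof.
  intros HA Huv Hg HL. rewrite psd_iff. intros z.
  assert (HR : forall y, psd n A -> psd n (fun j k => Cmult (A j k) (Cmult (cpow_pos y (s j)) (Cconj (cpow_pos y (s k))))))
    by (intros y; apply psd_rank1).
  assert (HI : CisInt (fun y => Cmult (RtoC (g y))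
        (Q n (fun j k => Cmult (A j k) (Cmult (cpow_pos y (s j)) (Cconj (cpow_pos y (s k))))) z)) u v
        (Q n (fun j k => Cmult (A j k) (L j k)) z)).
  { unfold Q.
    apply CisInt_ext with (fun y => sumC n (fun j => sumC n (fun k =>
       Cmult (Cmult (Cmult (A j k) (z j)) (Cconj (z k)))
        (Cmult (RtoC (g y)) (Cmult (cpow_pos y (s j)) (Cconj (cpow_pos y (s k)))))))).
    { intros y _. rewrite <- sumC_mult_l. apply sumC_ext. intros j _.
      rewrite <- sumC_mult_l. apply sumC_ext. intros k _. cext. }
    replace (sumC n (fun j => sumC n (fun k => Cmult (Cmult (Cmult (A j k) (L j k)) (z j)) (Cconj (z k)))))
      with (sumC n (fun j => sumC n (fun k => Cmult (Cmult (Cmult (A j k) (z j)) (Cconj (z k))) (L j k)))).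
    2: { apply sumC_ext; intros j _; apply sumC_ext; intros k _; cext. }
    apply (CisInt_sumC n (fun j y => sumC n (fun k =>
       Cmult (Cmult (Cmult (A j k) (z j)) (Cconj (z k)))
        (Cmult (RtoC (g y)) (Cmult (cpow_pos y (s j)) (Cconj (cpow_pos y (s k)))))))).
    intros j Hj.
    apply (CisInt_sumC n (fun k y =>
       Cmult (Cmult (Cmult (A j k) (z j)) (Cconj (z k)))
        (Cmult (RtoC (g y)) (Cmult (cpow_pos y (s j)) (Cconj (cpow_pos y (s k))))))).
    intros k Hk. apply CisInt_cmult. apply HL; auto. }
  destruct HI as [H1 H2]. split.
  - apply (is_RInt_unique (V:=R_CompleteNormedModule)) in H2. rewrite <- H2.
    apply (is_RInt_unique (V:=R_CompleteNormedModule)). eapply is_RInt_ext.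
    2: { assert (H0 := is_RInt_const (V:=R_NormedModule) u v 0).
         rewrite (scal_zero_r (V:=R_NormedModule)) in H0. exact H0. }
    intros y _. specialize (HR y HA). rewrite psd_iff in HR. destruct (HR z) as [Hi _].
    simpl in Hi |- *. unfold Im in Hi |- *. simpl. rewrite Hi. ring.
  - eapply is_RInt_ge_0. exact Huv. exact H1. intros y Hy.
    specialize (HR y HA). rewrite psd_iff in HR. destruct (HR z) as [Hi Hr].
    simpl in Hi, Hr |- *. unfold Im, Re in *. simpl. rewrite Hi.
    replace (g y * fst (Q n (fun j k => Cmult (A j k) (Cmult (cpow_pos y (s j)) (Cconj (cpow_pos y (s k))))) z) - 0 * 0)
    with (g y * fst (Q n (fun j k => Cmult (A j k) (Cmult (cpow_pos y (s j)) (Cconj (cpow_pos y (s k))))) z)) by ring.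
    apply Rmult_le_pos; auto.
Qed.


Lemma Rpower_der t a : 0 < t -> is_derive (fun x => Rpower x a) t (a * Rpower t (a - 1)).
Proof. intros H. apply is_derive_Reals. apply derivable_pt_lim_power; auto. Qed.

Lemma Rpower_cont t a : 0 < t -> continuous (fun x => Rpower x a) t.
Proof. intros H. apply (ex_derive_continuous (K:=R_AbsRing) (V:=R_NormedModule)). eexists. apply Rpower_der; auto. Qed.

Lemma RInt_bound (f G g : R -> R) x y : x <= y ->
  (forall t, x <= t <= y -> continuous f t) ->
  (forall t, x <= t <= y -> continuous g t) ->
  (forall t, x <= t <= y -> is_derive G t (g t)) ->
  (forall t, x < t < y -> Rabs (f t) <= g t) ->
  Rabs (RInt f x y) <= G y - G x.
Proof.
  intros Hxy Hf Hg HG Hb.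
  assert (Ef : ex_RInt f x y).
  { apply (ex_RInt_continuous (V:=R_CompleteNormedModule)). intros z Hz. rewrite Rmin_left, Rmax_right in Hz by lra. apply Hf; auto. }
  assert (Eg : is_RInt g x y (minus (G y) (G x))).
  { apply (is_RInt_derive (V:=R_CompleteNormedModule)); intros z Hz; rewrite Rmin_left, Rmax_right in Hz by lra.
    apply HG; auto. apply Hg; auto. }
  eapply Rle_trans. apply abs_RInt_le; auto.
  replace (G y - G x) with (RInt g x y).
  2: { apply (is_RInt_unique (V:=R_CompleteNormedModule)) in Eg. rewrite Eg. reflexivity. }
  apply RInt_le; auto.
  - apply (ex_RInt_norm f x y Ef).
  - eexists; eauto.
Qed.

Lemma RInt_bound_sym (f G g : R -> R) x y lo hi :
  lo <= x <= hi -> lo <= y <= hi ->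
  (forall t, lo <= t <= hi -> continuous f t) ->
  (forall t, lo <= t <= hi -> continuous g t) ->
  (forall t, lo <= t <= hi -> is_derive G t (g t)) ->
  (forall t, lo <= t <= hi -> Rabs (f t) <= g t) ->
  (forall t u, lo <= t <= u -> u <= hi -> G u - G t <= G hi - G lo) ->
  Rabs (RInt f x y) <= G hi - G lo.
Proof.
  intros Hx Hy Hf Hg HG Hb HM.
  destruct (Rle_lt_dec x y) as [H|H].
  - eapply Rle_trans. apply (RInt_bound f G g); auto; intros; try apply Hf; try apply Hg; try apply HG; try apply Hb; lra.
    apply HM; lra.
  - rewrite <- (opp_RInt_swap (V:=R_CompleteNormedModule)). unfold opp; simpl. rewrite Rabs_Ropp.
    eapply Rle_trans. apply (RInt_bound f G g); try lra; intros; try apply Hf; try apply Hg; try apply HG; try apply Hb; lra.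
    apply HM; lra.
    apply (ex_RInt_continuous (V:=R_CompleteNormedModule)). intros z Hz. apply Hf. split.
    apply Rle_trans with (Rmin y x). apply Rmin_glb; lra. apply Hz.
    apply Rle_trans with (Rmax y x). apply Hz. apply Rmax_lub; lra.
Qed.

Definition FP := filter_prod (at_right 0) (Rbar_locally p_infty).

Global Instance FP_proper : ProperFilter FP.
Proof. unfold FP. apply filter_prod_proper. Qed.

Lemma FP_ev (P : R * R -> Prop) d M : 0 < d ->
  (forall a b, 0 < a < d -> M < b -> P (a, b)) -> FP P.
Proof.
  intros Hd H. unfold FP. apply Filter_prod with (fun a => 0 < a < d) (fun b => M < b).
  - exists (mkposreal d Hd). intros y Hy Hy0. unfold ball in Hy; simpl in Hy.
    unfold AbsRing_ball, abs, minus, plus, opp in Hy; simpl in Hy. apply Rabs_lt_between in Hy. lra.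
  - exists M. auto.
  - auto.
Qed.

Section Improper.
Variable f : R -> R.
Variables sig C : R.
Hypothesis Hsig : 0 < sig.
Hypothesis HC : 0 <= C.
Hypothesis Hcont : forall x, 0 < x -> continuous f x.
Hypothesis Hlow : forall x, 0 < x <= 1 -> Rabs (f x) <= Rpower x (sig - 1).
Hypothesis Hup : forall x, 1 <= x -> Rabs (f x) <= C * exp (- x / 2).

Lemma exR a b : 0 < a -> 0 < b -> ex_RInt f a b.
Proof.
  intros Ha Hb. apply (ex_RInt_continuous (V:=R_CompleteNormedModule)). intros z Hz. apply Hcont.
  apply Rlt_le_trans with (Rmin a b). apply Rmin_glb_lt; auto. apply Hz.
Qed.

Lemma low_bound x y d : 0 < x <= d -> 0 < y <= d -> d <= 1 ->
  Rabs (RInt f x y) <= Rpower d sig / sig.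
Proof.
  intros Hx Hy Hd.
  set (lo := Rmin x y).
  assert (Hlo : 0 < lo) by (apply Rmin_glb_lt; lra).
  assert (Hlx : lo <= x) by apply Rmin_l. assert (Hly : lo <= y) by apply Rmin_r.
  eapply Rle_trans.
  apply (RInt_bound_sym f (fun t => / sig * Rpower t sig) (fun t => Rpower t (sig - 1)) x y lo d); try lra.
  - intros t Ht. apply Hcont. lra.
  - intros t Ht. apply Rpower_cont. lra.
  - intros t Ht. replace (Rpower t (sig - 1)) with (/ sig * (sig * Rpower t (sig - 1))) by (field; lra).
    apply (is_derive_scal (fun x => Rpower x sig)). apply Rpower_der. lra.
  - intros t Ht. apply Hlow. lra.
  - intros t u Htu Hu.
    assert (Rpower lo sig <= Rpower t sig) by (apply Rle_Rpower_l; lra).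
    assert (Rpower u sig <= Rpower d sig) by (apply Rle_Rpower_l; lra).
    assert (0 < / sig) by (apply Rinv_0_lt_compat; auto). nra.
  - assert (0 < Rpower lo sig) by (unfold Rpower; apply exp_pos).
    assert (0 < / sig) by (apply Rinv_0_lt_compat; auto). unfold Rdiv. nra.
Qed.

Lemma up_bound x y M : 1 <= M -> M <= x -> M <= y ->
  Rabs (RInt f x y) <= 2 * C * exp (- M / 2).
Proof.
  intros HM Hx Hy.
  set (lo := Rmin x y). set (hi := Rmax x y).
  assert (Hlx : lo <= x) by apply Rmin_l. assert (Hly : lo <= y) by apply Rmin_r.
  assert (Hhx : x <= hi) by apply Rmax_l. assert (Hhy : y <= hi) by apply Rmax_r.
  assert (HMlo : M <= lo) by (apply Rmin_glb; auto).
  eapply Rle_trans.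
  apply (RInt_bound_sym f (fun t => - 2 * C * exp (- t / 2)) (fun t => C * exp (- t / 2)) x y lo hi); try lra.
  - intros t Ht. apply Hcont. lra.
  - intros t Ht. apply (ex_derive_continuous (K:=R_AbsRing) (V:=R_NormedModule)). auto_derive. auto.
  - intros t Ht. auto_derive. auto. unfold Rdiv. set (E := exp _). change (RinvImpl.Rinv 2) with (/ 2). field.
  - intros t Ht. apply Hup. lra.
  - intros t u Htu Hu.
    assert (exp (- u / 2) >= exp (- hi / 2)).
    { destruct (Req_dec u hi). subst; lra. left; apply exp_increasing; lra. }
    assert (exp (- t / 2) <= exp (- lo / 2)).
    { destruct (Req_dec t lo). subst; lra. left; apply exp_increasing; lra. }
    nra.
  - assert (exp (- lo / 2) <= exp (- M / 2)).
    { destruct (Req_dec lo M). rewrite H; lra. left; apply exp_increasing; lra. }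
    assert (0 < exp (- hi / 2)) by apply exp_pos. nra.
Qed.

Lemma improper_cvg : exists l, filterlim (fun ab => RInt f (fst ab) (snd ab)) FP (locally l).
Proof.
  apply (filterlim_locally_cauchy (U:=R_CompleteSpace) (F:=FP)).
  intros eps.
  set (e := pos eps). assert (He : 0 < e) by (apply cond_pos).
  set (d := Rmin 1 (exp (ln (e * sig / 4) / sig))).
  assert (Hd : 0 < d) by (apply Rmin_glb_lt; [lra| apply exp_pos]).
  assert (Hd1 : d <= 1) by apply Rmin_l.
  assert (Hdp : Rpower d sig / sig <= e / 4).
  { assert (Rpower d sig <= Rpower (exp (ln (e * sig / 4) / sig)) sig) by
      (apply Rle_Rpower_l; [lra| split; [auto| apply Rmin_r]]).
    unfold Rpower at 2 in H. rewrite ln_exp in H.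
    replace (sig * (ln (e * sig / 4) / sig)) with (ln (e * sig / 4)) in H by (field; lra).
    rewrite exp_ln in H by (apply Rmult_lt_0_compat; [nra| lra]).
    apply Rmult_le_reg_r with sig; auto. unfold Rdiv. rewrite Rmult_assoc, Rinv_l by lra. lra. }
  set (M := Rmax 1 (- 2 * ln (e / (8 * (C + 1))))).
  assert (HM1 : 1 <= M) by apply Rmax_l.
  assert (HMp : 2 * C * exp (- M / 2) <= e / 4).
  { assert (exp (- M / 2) <= e / (8 * (C + 1))).
    { rewrite <- (exp_ln (e / (8 * (C + 1)))).
      2: { apply Rdiv_lt_0_compat; lra. }
      assert (- M / 2 <= ln (e / (8 * (C + 1)))).
      { assert (- 2 * ln (e / (8 * (C + 1))) <= M) by apply Rmax_r. lra. }
      destruct H. left; apply exp_increasing; auto. rewrite H; lra. }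
    assert (2 * C * (e / (8 * (C + 1))) <= e / 4).
    { unfold Rdiv. rewrite Rinv_mult. assert (0 < / (C + 1)) by (apply Rinv_0_lt_compat; lra).
      assert (C * / (C + 1) <= 1). { apply Rmult_le_reg_r with (C + 1). lra.
        rewrite Rmult_assoc, Rinv_l by lra. lra. }
      assert (0 < / 8) by lra. nra. }
    assert (0 <= exp (- M / 2)) by (left; apply exp_pos). nra. }
  exists (fun ab => 0 < fst ab < d /\ M < snd ab). split.
  - apply (FP_ev _ d M); auto.
  - intros [a b] [a' b'] [Ha Hb] [Ha' Hb']. simpl in *.
    unfold ball; simpl. unfold AbsRing_ball, abs, minus, plus, opp; simpl.
    rewrite <- (RInt_Chasles f a' a b') by (apply exR; lra).
    rewrite <- (RInt_Chasles f a b b') by (apply exR; lra).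
    change (Rabs (plus (RInt f a' a) (plus (RInt f a b) (RInt f b b')) + - RInt f a b) < e).
    unfold plus; simpl.
    replace (RInt f a' a + (RInt f a b + RInt f b b') + - RInt f a b) with (RInt f a' a + RInt f b b') by ring.
    eapply Rle_lt_trans. apply Rabs_triang.
    assert (Rabs (RInt f a' a) <= Rpower d sig / sig) by (apply low_bound; lra).
    assert (Rabs (RInt f b b') <= 2 * C * exp (- M / 2)) by (apply up_bound; lra).
    lra.
Qed.

Lemma improper_lim :
  filterlim (fun ab => RInt f (fst ab) (snd ab)) FP (locally (RInt_gen f (at_right 0) (Rbar_locally p_infty))).
Proof.
  destruct improper_cvg as [l Hl].
  replace (RInt_gen f (at_right 0) (Rbar_locally p_infty)) with l; auto.
  symmetry. apply (is_RInt_gen_unique (V:=R_CompleteNormedModule)).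
  unfold is_RInt_gen, filterlimi, filter_le, filtermapi. intros P HP.
  specialize (Hl P HP). unfold filtermap in Hl.
  assert (Hpos : FP (fun ab => 0 < fst ab /\ 0 < snd ab)).
  { apply (FP_ev _ 1 0); simpl; intros; lra. }
  fold FP. generalize (filter_and _ _ Hl Hpos). apply filter_imp.
  intros [a b] [H1 [H2 H3]]. simpl in *. exists (RInt f a b). split; auto.
  apply (RInt_correct (V:=R_CompleteNormedModule)). apply exR; auto.
Qed.

End Improper.


Lemma Re_cpow_bound t s : Rabs (Re (cpow_pos t s)) <= Rpower t (Re s).
Proof.
  unfold cpow_pos, Re, Rpower; simpl. rewrite Rabs_mult, Rabs_pos_eq by (left; apply exp_pos).
  rewrite <- (Rmult_1_r (exp (fst s * ln t))) at 2. apply Rmult_le_compat_l. left; apply exp_pos.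
  apply Rabs_le. apply COS_bound.
Qed.

Lemma Im_cpow_bound t s : Rabs (Im (cpow_pos t s)) <= Rpower t (Re s).
Proof.
  unfold cpow_pos, Im, Re, Rpower; simpl. rewrite Rabs_mult, Rabs_pos_eq by (left; apply exp_pos).
  rewrite <- (Rmult_1_r (exp (fst s * ln t))) at 2. apply Rmult_le_compat_l. left; apply exp_pos.
  apply Rabs_le. apply SIN_bound.
Qed.

Definition Cg sig := let K := Rmax (sig - 1) 1 in exp (K * ln (2 * K) - K).

Lemma gamma_up_bound sig t : 1 <= t -> Rpower t (sig - 1) * exp (- t) <= Cg sig * exp (- t / 2).
Proof.
  intros Ht. unfold Cg, Rpower. set (K := Rmax (sig - 1) 1).
  assert (HK1 : 1 <= K) by apply Rmax_r. assert (HK2 : sig - 1 <= K) by apply Rmax_l.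
  rewrite <- !exp_plus.
  assert (Hl : 0 <= ln t) by (rewrite <- ln_1; apply ln_le; lra).
  assert (H2 : ln (t / (2 * K)) <= t / (2 * K) - 1).
  { assert (H := exp_ineq1_le (ln (t / (2 * K)))). rewrite exp_ln in H. lra.
    apply Rdiv_lt_0_compat; lra. }
  rewrite ln_div in H2 by lra.
  assert (H3 : K * (ln t - ln (2 * K)) <= K * (t / (2 * K) - 1)) by (apply Rmult_le_compat_l; lra).
  replace (K * (t / (2 * K) - 1)) with (t / 2 - K) in H3 by (field; lra).
  assert (H4 : (sig - 1) * ln t <= K * ln t) by (apply Rmult_le_compat_r; lra).
  destruct (Req_dec ((sig - 1) * ln t + - t) (K * ln (2 * K) - K + - t / 2)) as [E|E].
  rewrite E; lra. left. apply exp_increasing. lra.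
Qed.

Section Gam.
Variable w : C.
Hypothesis Hw : 0 < Re w.

Definition gam (t : R) : C := Cmult (cpow_pos t (Cminus w (RtoC 1))) (RtoC (exp (- t))).

Definition fre (t : R) := Re (cpow_pos t (Cminus w (RtoC 1))) * exp (- t).
Definition fim (t : R) := Im (cpow_pos t (Cminus w (RtoC 1))) * exp (- t).

Lemma fre_cont t : 0 < t -> continuous fre t.
Proof.
  intros Ht. apply (ex_derive_continuous (K:=R_AbsRing) (V:=R_NormedModule)).
  unfold fre, cpow_pos, Re, Im, Cminus, Cplus, Copp, RtoC; simpl. auto_derive. auto.
Qed.

Lemma fim_cont t : 0 < t -> continuous fim t.
Proof.
  intros Ht. apply (ex_derive_continuous (K:=R_AbsRing) (V:=R_NormedModule)).
  unfold fim, cpow_pos, Re, Im, Cminus, Cplus, Copp, RtoC; simpl. auto_derive. auto.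
Qed.

Lemma Re_wm1 : Re (Cminus w (RtoC 1)) = Re w - 1.
Proof. unfold Cminus, Cplus, Copp, RtoC, Re; simpl. ring. Qed.

Lemma f_low (f : R -> R) : (forall t, 0 < t -> Rabs (f t) <= Rpower t (Re w - 1) * exp (- t)) ->
  forall x, 0 < x <= 1 -> Rabs (f x) <= Rpower x (Re w - 1).
Proof.
  intros H x Hx. eapply Rle_trans. apply H; lra.
  rewrite <- (Rmult_1_r (Rpower x (Re w - 1))) at 2. apply Rmult_le_compat_l.
  unfold Rpower; left; apply exp_pos. rewrite <- exp_0.
  destruct (Req_dec x 0). lra. left; apply exp_increasing; lra.
Qed.

Lemma f_up (f : R -> R) : (forall t, 0 < t -> Rabs (f t) <= Rpower t (Re w - 1) * exp (- t)) ->
  forall x, 1 <= x -> Rabs (f x) <= Cg (Re w) * exp (- x / 2).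
Proof. intros H x Hx. eapply Rle_trans. apply H; lra. apply gamma_up_bound; auto. Qed.

Lemma fre_bound t : 0 < t -> Rabs (fre t) <= Rpower t (Re w - 1) * exp (- t).
Proof.
  intros Ht. unfold fre. rewrite Rabs_mult, (Rabs_pos_eq (exp _)) by (left; apply exp_pos).
  apply Rmult_le_compat_r. left; apply exp_pos. rewrite <- Re_wm1. apply Re_cpow_bound.
Qed.

Lemma fim_bound t : 0 < t -> Rabs (fim t) <= Rpower t (Re w - 1) * exp (- t).
Proof.
  intros Ht. unfold fim. rewrite Rabs_mult, (Rabs_pos_eq (exp _)) by (left; apply exp_pos).
  apply Rmult_le_compat_r. left; apply exp_pos. rewrite <- Re_wm1. apply Im_cpow_bound.
Qed.

Lemma Cg_pos : 0 <= Cg (Re w).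
Proof. unfold Cg. left; apply exp_pos. Qed.

Lemma Re_gam : (fun x => Re (gam x)) = fre.
Proof. apply functional_extensionality. intros x. unfold gam, fre. simpl. ring. Qed.
Lemma Im_gam : (fun x => Im (gam x)) = fim.
Proof. apply functional_extensionality. intros x. unfold gam, fim. simpl. ring. Qed.

Lemma gamma_lim : Ccvg FP (fun ab => CInt gam (fst ab) (snd ab)) (cGamma w).
Proof.
  unfold CInt, cGamma. rewrite Re_gam, Im_gam. split; simpl.
  - apply (improper_lim fre (Re w) (Cg (Re w))); auto.
    apply Cg_pos. apply fre_cont. apply f_low, fre_bound. apply f_up, fre_bound.
  - apply (improper_lim fim (Re w) (Cg (Re w))); auto.
    apply Cg_pos. apply fim_cont. apply f_low, fim_bound. apply f_up, fim_bound.
Qed.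

Lemma gam_CisInt a b : 0 < a -> 0 < b -> CisInt gam a b (CInt gam a b).
Proof.
  intros Ha Hb. apply CisInt_CInt; [rewrite Re_gam | rewrite Im_gam];
  apply (ex_RInt_continuous (V:=R_CompleteNormedModule)); intros z Hz;
  [apply fre_cont | apply fim_cont];
  apply Rlt_le_trans with (Rmin a b); try apply Hz; apply Rmin_glb_lt; auto.
Qed.

End Gam.

Lemma CisInt_unique f a b l : CisInt f a b l -> CInt f a b = l.
Proof.
  intros [H1 H2]. unfold CInt.
  apply (is_RInt_unique (V:=R_CompleteNormedModule)) in H1.
  apply (is_RInt_unique (V:=R_CompleteNormedModule)) in H2.
  rewrite H1, H2. destruct l; auto.
Qed.

Lemma Ccvg_ext_loc {T} (F : (T -> Prop) -> Prop) {FF : Filter F} f g l :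
  F (fun x => f x = g x) -> Ccvg F g l -> Ccvg F f l.
Proof.
  intros H [H1 H2]. split; eapply filterlim_ext_loc; eauto;
  eapply filter_imp; eauto; intros x Hx; simpl; rewrite Hx; auto.
Qed.

Lemma Ccvg_comp {T U} (F : (T -> Prop) -> Prop) (G : (U -> Prop) -> Prop) (h : T -> U) f l :
  filterlim h F G -> Ccvg G f l -> Ccvg F (fun x => f (h x)) l.
Proof.
  intros Hh [H1 H2]. split. exact (filterlim_comp _ _ _ _ _ _ _ _ Hh H1). exact (filterlim_comp _ _ _ _ _ _ _ _ Hh H2).
Qed.

Lemma FP_scale a : 0 < a -> filterlim (fun ab : R * R => (a * fst ab, a * snd ab)) FP FP.
Proof.
  intros Ha P HP. destruct HP as [Q R HQ HR HPQR]. unfold filtermap.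
  apply Filter_prod with (fun x => Q (a * x)) (fun y => R (a * y)).
  - destruct HQ as [eps Heps]. assert (He : 0 < eps / a) by (apply Rdiv_lt_0_compat; [apply cond_pos|auto]).
    exists (mkposreal _ He). intros y Hy Hy0. apply Heps.
    + unfold ball in Hy |- *; simpl in *. unfold AbsRing_ball, abs, minus, plus, opp in *; simpl in *.
      rewrite Ropp_0, Rplus_0_r in *.
      rewrite Rabs_mult, (Rabs_pos_eq a) by lra.
      apply Rmult_lt_reg_r with (/ a). apply Rinv_0_lt_compat; auto.
      replace (a * Rabs y * / a) with (Rabs y) by (field; lra). exact Hy.
    + apply Rmult_lt_0_compat; auto.
  - destruct HR as [M HM]. exists (M / a). intros x Hx. apply HM.
    apply Rmult_lt_reg_r with (/ a). apply Rinv_0_lt_compat; auto.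
    replace (a * x * / a) with x by (field; lra). exact Hx.
  - intros x y Hx Hy. apply HPQR; auto.
Qed.


Definition gama (w : C) (a : R) (y : R) : C :=
  Cmult (cpow_pos y (Cminus w (RtoC 1))) (RtoC (exp (- (a * y)))).

Lemma cpow_inv_a w a : 0 < a ->
  Cmult (cpow_pos a (Copp w)) (Cmult (RtoC a) (cpow_pos a (Cminus w (RtoC 1)))) = RtoC 1.
Proof.
  intros Ha. unfold Cminus. rewrite cpow_add.
  replace (Copp (RtoC 1)) with (RtoC (-1)) by cext. rewrite cpow_real.
  replace (Rpower a (-1)) with (/ a).
  2: { unfold Rpower. replace (-1 * ln a) with (- ln a) by ring. rewrite exp_Ropp, exp_ln; auto. }
  rewrite <- (cpow_opp a w).
  set (P := cpow_pos a (Copp w)). set (W := cpow_pos a w).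
  transitivity (Cmult (Cmult P W) (RtoC (a * / a))). cext.
  rewrite Rinv_r by lra. cext.
Qed.

Lemma gama_CisInt w a u v : 0 < Re w -> 0 < a -> 0 < u -> 0 < v ->
  CisInt (gama w a) u v (Cmult (cpow_pos a (Copp w)) (CInt (gam w) (a * u) (a * v))).
Proof.
  intros Hw Ha Hu Hv.
  assert (H := gam_CisInt w (a * u) (a * v) ltac:(nra) ltac:(nra)).
  apply CisInt_comp_lin in H. apply (CisInt_cmult (cpow_pos a (Copp w))) in H.
  eapply CisInt_ext; [|exact H]. intros y Hy.
  assert (Hy0 : 0 < y). { apply Rlt_trans with (Rmin u v). apply Rmin_glb_lt; auto. apply Hy. }
  unfold gam, gama. rewrite cpow_mul by auto.
  set (Y := cpow_pos y (Cminus w (RtoC 1))). set (E := RtoC (exp (- (a * y)))).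
  transitivity (Cmult (Cmult (cpow_pos a (Copp w)) (Cmult (RtoC a) (cpow_pos a (Cminus w (RtoC 1))))) (Cmult Y E)).
  { set (P := cpow_pos a (Copp w)). set (W := cpow_pos a (Cminus w (RtoC 1))). cext. }
  rewrite cpow_inv_a by auto. cext.
Qed.

Lemma shift_Ccvg w a : 0 < Re w -> 0 < a ->
  Ccvg FP (fun ab => Cmult (cpow_pos a (Copp w)) (CInt (gam w) (a * fst ab) (a * snd ab)))
    (Cmult (cpow_pos a (Copp w)) (cGamma w)).
Proof.
  intros Hw Ha. apply (Ccvg_mult FP (FF:=filter_filter)). apply (Ccvg_const FP (FF:=filter_filter)).
  apply (Ccvg_comp FP FP (fun ab : R * R => (a * fst ab, a * snd ab)) (fun ab => CInt (gam w) (fst ab) (snd ab))).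
  apply FP_scale; auto. apply gamma_lim; auto.
Qed.

Definition phi (w : C) (a b : R) (y : R) : C := Cminus (gama w a y) (gama w b y).

Lemma phi_CInt w a b u v : 0 < Re w -> 0 < a -> 0 < b -> 0 < u -> 0 < v ->
  CInt (phi w a b) u v = Cminus (Cmult (cpow_pos a (Copp w)) (CInt (gam w) (a * u) (a * v)))
                                (Cmult (cpow_pos b (Copp w)) (CInt (gam w) (b * u) (b * v))).
Proof.
  intros. apply CisInt_unique. apply CisInt_minus; apply gama_CisInt; auto.
Qed.

Lemma phi_CisInt w a b u v : 0 < Re w -> 0 < a -> 0 < b -> 0 < u -> 0 < v ->
  CisInt (phi w a b) u v (CInt (phi w a b) u v).
Proof.
  intros. rewrite phi_CInt by auto. apply CisInt_minus; apply gama_CisInt; auto.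
Qed.

Lemma phi_Ccvg w a b : 0 < Re w -> 0 < a -> 0 < b ->
  Ccvg FP (fun ab => CInt (phi w a b) (fst ab) (snd ab))
    (Cmult (Cminus (cpow_pos a (Copp w)) (cpow_pos b (Copp w))) (cGamma w)).
Proof.
  intros Hw Ha Hb.
  apply (Ccvg_ext_loc FP (FF:=filter_filter)) with (fun ab =>
     Cminus (Cmult (cpow_pos a (Copp w)) (CInt (gam w) (a * fst ab) (a * snd ab)))
            (Cmult (cpow_pos b (Copp w)) (CInt (gam w) (b * fst ab) (b * snd ab)))).
  - apply (FP_ev _ 1 0). lra. intros u v Hu Hv. simpl. apply phi_CInt; auto; lra.
  - replace (Cmult (Cminus (cpow_pos a (Copp w)) (cpow_pos b (Copp w))) (cGamma w)) with
      (Cminus (Cmult (cpow_pos a (Copp w)) (cGamma w)) (Cmult (cpow_pos b (Copp w)) (cGamma w))) by cext.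
    apply (Ccvg_minus FP (FF:=filter_filter)); apply shift_Ccvg; auto.
Qed.

Lemma phi_kernel s t a b y : 0 < y ->
  phi (Cplus s (Cconj t)) a b y =
  Cmult (RtoC ((exp (- (a * y)) - exp (- (b * y))) / y)) (Cmult (cpow_pos y s) (Cconj (cpow_pos y t))).
Proof.
  intros Hy. unfold phi, gama. rewrite cpow_kernel by auto.
  set (S := cpow_pos y s). set (T := cpow_pos y t). unfold Rdiv. cext.
Qed.


Lemma sum_Sn_R (a : nat -> R) n : sum_n a (S n) = sum_n a n + a (S n).
Proof. exact (sum_Sn a n). Qed.
Lemma sum_O_R (a : nat -> R) : sum_n a 0 = a O.
Proof. exact (sum_O a). Qed.

Lemma alt_sum (psi : nat -> R) n :
  sum_n (fun k => (-1) ^ k * psi k) (S (2 * n)) = sum_n (fun i => psi (2 * i)%nat - psi (S (2 * i))) n.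
Proof.
  induction n.
  - rewrite sum_Sn_R, !sum_O_R. simpl. ring.
  - replace (S (2 * S n)) with (S (S (S (2 * n)))) by lia.
    rewrite (sum_Sn_R (fun k => (-1) ^ k * psi k) (S (S (2 * n)))).
    rewrite (sum_Sn_R (fun k => (-1) ^ k * psi k) (S (2 * n))), IHn.
    rewrite (sum_Sn_R (fun i => psi (2 * i)%nat - psi (S (2 * i))) n).
    replace (S (S (2 * n))) with (2 * S n)%nat by lia.
    rewrite pow_1_odd, pow_1_even. set (X := sum_n _ n). lra.
Qed.

Lemma lim_even_odd (u : nat -> R) (l : R) :
  is_lim_seq (fun n => u (2 * n)%nat) l -> is_lim_seq (fun n => u (S (2 * n))) l -> is_lim_seq u l.
Proof.
  rewrite <- !is_lim_seq_spec. simpl. intros He Ho eps.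
  destruct (He eps) as [N1 H1]. destruct (Ho eps) as [N2 H2].
  exists (2 * N1 + 2 * N2)%nat. intros n Hn.
  destruct (Nat.Even_or_Odd n) as [[m Hm]|[m Hm]]; subst n.
  - apply H1. lia.
  - replace (2 * m + 1)%nat with (S (2 * m)) by lia. apply H2. lia.
Qed.

Lemma alt_lim (psi : nat -> R) (L : R) :
  is_lim_seq (sum_n (fun i => psi (2 * i)%nat - psi (S (2 * i)))) L -> is_lim_seq psi 0 ->
  is_lim_seq (sum_n (fun k => (-1) ^ k * psi k)) L.
Proof.
  intros HL H0. apply lim_even_odd.
  - apply is_lim_seq_ext with (fun n => sum_n (fun i => psi (2 * i)%nat - psi (S (2 * i))) n - (-1) * psi (S (2 * n))).
    { intros n. rewrite <- alt_sum. rewrite sum_Sn_R. rewrite pow_1_odd. ring. }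
    replace L with (L - (-1) * 0) by ring. apply is_lim_seq_minus'; auto.
    apply is_lim_seq_scal_l with (a := -1) (lu := 0) (u := fun n => psi (S (2 * n))).
    apply (is_lim_seq_subseq psi 0 (fun n => S (2 * n))); auto.
    apply eventually_subseq. intros; lia.
  - apply is_lim_seq_ext with (sum_n (fun i => psi (2 * i)%nat - psi (S (2 * i)))); auto.
    intros n. rewrite alt_sum. auto.
Qed.

Lemma rpow_lim p (f : nat -> R) : p < 0 -> (forall n, INR n <= f n) -> (forall n, 0 < f n) ->
  is_lim_seq (fun n => Rpower (f n) p) 0.
Proof.
  intros Hp Hf Hf0. rewrite <- is_lim_seq_spec. intros eps.
  assert (HI := is_lim_seq_INR). rewrite <- is_lim_seq_spec in HI.
  destruct (HI (exp (ln eps / p))) as [N HN]. exists N. intros n Hn.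
  specialize (HN n Hn). rewrite Rminus_0_r, Rabs_pos_eq by (unfold Rpower; left; apply exp_pos).
  unfold Rpower. rewrite <- (exp_ln eps) by apply cond_pos. apply exp_increasing.
  assert (ln eps / p < ln (f n)).
  { rewrite <- (ln_exp (ln eps / p)). apply ln_increasing. apply exp_pos. specialize (Hf n). lra. }
  apply Rmult_lt_reg_r with (/ (- p)). apply Rinv_0_lt_compat; lra.
  replace (p * ln (f n) * / - p) with (- ln (f n)) by (field; lra).
  replace (ln eps * / - p) with (- (ln eps / p)) by (field; lra). lra.
Qed.

Lemma tele_series (t : nat -> R) c : is_lim_seq t 0 -> ex_series (fun i => c * (t i - t (S i))).
Proof.
  intros Ht. exists (c * t O).
  assert (E : forall n, sum_n (fun i => c * (t i - t (S i))) n = c * (t O - t (S n))).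
  { induction n. rewrite sum_O_R. auto. rewrite sum_Sn_R, IHn. change (c * (t O - t (S n)) + c * (t (S n) - t (S (S n))) = c * (t O - t (S (S n)))). ring. }
  change (is_lim_seq (sum_n (fun i => c * (t i - t (S i)))) (c * t O)).
  apply is_lim_seq_ext with (fun n => c * (t O - t (S n))). intros; rewrite E; auto.
  replace (c * t O) with (c * (t O - 0)) by ring.
  apply is_lim_seq_scal_l with (lu := t O - 0).
  apply is_lim_seq_minus'. apply is_lim_seq_const. apply (is_lim_seq_incr_1 t 0). auto.
Qed.

Lemma diff_bound (f df : R -> R) p K a b : p < 0 -> 0 <= K -> 0 < a <= b ->
  (forall x, 0 < x -> is_derive f x (df x)) -> (forall x, 0 < x -> continuous df x) ->
  (forall x, 0 < x -> Rabs (df x) <= K * Rpower x (p - 1)) ->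
  Rabs (f b - f a) <= K / (- p) * (Rpower a p - Rpower b p).
Proof.
  intros Hp HK Hab Hd Hc Hb.
  assert (HI : is_RInt df a b (minus (f b) (f a))).
  { apply (is_RInt_derive (V:=R_CompleteNormedModule)); intros x Hx;
    rewrite Rmin_left, Rmax_right in Hx by lra. apply Hd; lra. apply Hc; lra. }
  apply (is_RInt_unique (V:=R_CompleteNormedModule)) in HI.
  change (minus (f b) (f a)) with (f b - f a) in HI. rewrite <- HI.
  eapply Rle_trans. apply (RInt_bound df (fun t => K / p * Rpower t p) (fun t => K * Rpower t (p - 1))); try lra.
  - intros t Ht. apply Hc; lra.
  - intros t Ht. apply (ex_derive_continuous (K:=R_AbsRing) (V:=R_NormedModule)).
    apply (ex_derive_scal (fun x => Rpower x (p - 1))). eexists. apply Rpower_der; lra.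
  - intros t Ht. replace (K * Rpower t (p - 1)) with (K / p * (p * Rpower t (p - 1))) by (field; lra).
    apply (is_derive_scal (fun x => Rpower x p)). apply Rpower_der. lra.
  - intros t Ht. apply Hb; lra.
  - right. field. lra.
Qed.

Definition ce p q x := exp (p * ln x) * cos (q * ln x).
Definition se p q x := exp (p * ln x) * sin (q * ln x).

Lemma ce_der p q x : 0 < x -> is_derive (ce p q) x (exp (p * ln x) * (p * cos (q * ln x) - q * sin (q * ln x)) / x).
Proof. intros Hx. unfold ce. auto_derive. auto. field. lra. Qed.
Lemma se_der p q x : 0 < x -> is_derive (se p q) x (exp (p * ln x) * (p * sin (q * ln x) + q * cos (q * ln x)) / x).
Proof. intros Hx. unfold se. auto_derive. auto. field. lra. Qed.

Lemma exp_div x p : 0 < x -> exp (p * ln x) / x = Rpower x (p - 1).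
Proof.
  intros Hx. unfold Rpower. rewrite Rmult_minus_distr_r, Rmult_1_l. unfold Rminus.
  rewrite exp_plus, exp_Ropp, exp_ln by auto. unfold Rdiv. auto.
Qed.

Lemma trig_bound p q c s : Rabs c <= 1 -> Rabs s <= 1 -> Rabs (p * c - q * s) <= Rabs p + Rabs q.
Proof.
  intros Hc Hs. eapply Rle_trans. apply Rabs_triang. rewrite Rabs_Ropp, !Rabs_mult.
  assert (Rabs p * Rabs c <= Rabs p) by (rewrite <- (Rmult_1_r (Rabs p)) at 2; apply Rmult_le_compat_l; auto; apply Rabs_pos).
  assert (Rabs q * Rabs s <= Rabs q) by (rewrite <- (Rmult_1_r (Rabs q)) at 2; apply Rmult_le_compat_l; auto; apply Rabs_pos).
  lra.
Qed.

Lemma ce_diff p q a b : p < 0 -> 0 < a <= b ->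
  Rabs (ce p q b - ce p q a) <= (Rabs p + Rabs q) / (- p) * (Rpower a p - Rpower b p).
Proof.
  intros Hp Hab. apply diff_bound with (fun x => exp (p * ln x) * (p * cos (q * ln x) - q * sin (q * ln x)) / x); auto.
  - assert (0 <= Rabs p) by apply Rabs_pos. assert (0 <= Rabs q) by apply Rabs_pos. lra.
  - intros; apply ce_der; auto.
  - intros x Hx. apply (ex_derive_continuous (K:=R_AbsRing) (V:=R_NormedModule)). auto_derive. lra.
  - intros x Hx. rewrite <- exp_div by auto. unfold Rdiv.
    rewrite Rmult_assoc, (Rmult_comm _ (/ x)), <- Rmult_assoc, Rabs_mult, Rmult_comm.
    apply Rmult_le_compat. apply Rabs_pos. apply Rabs_pos.
    apply trig_bound. apply Rabs_le, COS_bound. apply Rabs_le, SIN_bound.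
    rewrite Rabs_pos_eq. lra. apply Rmult_le_pos. left; apply exp_pos. left; apply Rinv_0_lt_compat; auto.
Qed.

Lemma se_diff p q a b : p < 0 -> 0 < a <= b ->
  Rabs (se p q b - se p q a) <= (Rabs p + Rabs q) / (- p) * (Rpower a p - Rpower b p).
Proof.
  intros Hp Hab. apply diff_bound with (fun x => exp (p * ln x) * (p * sin (q * ln x) + q * cos (q * ln x)) / x); auto.
  - assert (0 <= Rabs p) by apply Rabs_pos. assert (0 <= Rabs q) by apply Rabs_pos. lra.
  - intros; apply se_der; auto.
  - intros x Hx. apply (ex_derive_continuous (K:=R_AbsRing) (V:=R_NormedModule)). auto_derive. lra.
  - intros x Hx. rewrite <- exp_div by auto. unfold Rdiv.
    rewrite Rmult_assoc, (Rmult_comm _ (/ x)), <- Rmult_assoc, Rabs_mult, Rmult_comm.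
    apply Rmult_le_compat. apply Rabs_pos. apply Rabs_pos.
    replace (p * sin (q * ln x) + q * cos (q * ln x)) with (p * sin (q * ln x) - (- q) * cos (q * ln x)) by ring.
    rewrite <- (Rabs_Ropp q). apply trig_bound. apply Rabs_le, SIN_bound. apply Rabs_le, COS_bound.
    rewrite Rabs_pos_eq. lra. apply Rmult_le_pos. left; apply exp_pos. left; apply Rinv_0_lt_compat; auto.
Qed.


Lemma Rpower_decr a b p : 0 < a <= b -> p <= 0 -> Rpower b p <= Rpower a p.
Proof.
  intros Hab Hp. unfold Rpower.
  assert (ln a <= ln b) by (destruct (Req_dec a b); [subst; lra| left; apply ln_increasing; lra]).
  assert (p * ln b <= p * ln a) by nra.
  destruct (Req_dec (p * ln b) (p * ln a)) as [E|E]. rewrite E; lra. left; apply exp_increasing; lra.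
Qed.

Lemma part_lim (g : R -> R) p K : p < 0 -> 0 <= K ->
  (forall a b, 0 < a <= b -> Rabs (g b - g a) <= K * (Rpower a p - Rpower b p)) ->
  (forall x, 0 < x -> Rabs (g x) <= Rpower x p) ->
  exists L : R, is_lim_seq (sum_n (fun i => g (INR (2 * i + 1)) - g (INR (S (2 * i) + 1)))) L /\
            is_lim_seq (sum_n (fun k => (-1) ^ k * g (INR (k + 1)))) L.
Proof.
  intros Hp HK Hd Hb.
  set (psi := fun k => g (INR (k + 1))).
  assert (Hpos : forall k, 0 < INR (k + 1)) by (intros; apply lt_0_INR; lia).
  assert (Hex : ex_series (fun i => psi (2 * i)%nat - psi (S (2 * i)))).
  { apply (ex_series_le (K:=R_AbsRing) (V:=R_CompleteNormedModule)) with (fun i => K * (Rpower (INR (2 * i + 1)) p - Rpower (INR (2 * (S i) + 1)) p)).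
    - intros i. change (norm (psi (2 * i)%nat - psi (S (2 * i)))) with (Rabs (psi (2 * i)%nat - psi (S (2 * i)))).
      unfold psi. rewrite Rabs_minus_sym.
      eapply Rle_trans. apply Hd. split. apply Hpos. apply le_INR; lia.
      apply Rmult_le_compat_l; auto.
      assert (Rpower (INR (2 * S i + 1)) p <= Rpower (INR (S (2 * i) + 1)) p).
      { apply Rpower_decr. split. apply Hpos. apply le_INR; lia. lra. }
      lra.
    - apply (tele_series (fun i => Rpower (INR (2 * i + 1)) p)).
      apply rpow_lim; auto. intros; apply le_INR; lia. }
  destruct Hex as [L HL]. exists L. split. exact HL.
  apply alt_lim. exact HL.
  apply is_lim_seq_abs_0.
  apply is_lim_seq_le_le with (fun _ => 0) (fun k => Rpower (INR (k + 1)) p).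
  - intros k. split. apply Rabs_pos. apply Hb. apply Hpos.
  - apply is_lim_seq_const.
  - apply rpow_lim; auto. intros; apply le_INR; lia.
Qed.

Definition dterm (w : C) (i : nat) : C :=
  Cminus (cpow_pos (INR (2 * i + 1)) (Copp w)) (cpow_pos (INR (2 * i + 2)) (Copp w)).

Lemma Re_sumC N (f : nat -> C) : Re (sumC (S N) f) = sum_n (fun i => Re (f i)) N.
Proof.
  induction N. rewrite sum_O_R. simpl. apply Rplus_0_l.
  rewrite sum_Sn_R, <- IHN. simpl. auto.
Qed.
Lemma Im_sumC N (f : nat -> C) : Im (sumC (S N) f) = sum_n (fun i => Im (f i)) N.
Proof.
  induction N. rewrite sum_O_R. simpl. apply Rplus_0_l.
  rewrite sum_Sn_R, <- IHN. simpl. auto.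
Qed.

Lemma ce_bound p q x : Rabs (ce p q x) <= Rpower x p.
Proof.
  unfold ce, Rpower. rewrite Rabs_mult, Rabs_pos_eq by (left; apply exp_pos).
  rewrite <- (Rmult_1_r (exp (p * ln x))) at 2. apply Rmult_le_compat_l. left; apply exp_pos.
  apply Rabs_le, COS_bound.
Qed.
Lemma se_bound p q x : Rabs (se p q x) <= Rpower x p.
Proof.
  unfold se, Rpower. rewrite Rabs_mult, Rabs_pos_eq by (left; apply exp_pos).
  rewrite <- (Rmult_1_r (exp (p * ln x))) at 2. apply Rmult_le_compat_l. left; apply exp_pos.
  apply Rabs_le, SIN_bound.
Qed.

Lemma Series_lim (a : nat -> R) (L : R) : is_lim_seq (sum_n a) L -> Series a = L.
Proof. intros H. unfold Series. rewrite (is_lim_seq_unique _ _ H). auto. Qed.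

Lemma eta_lim w : 0 < Re w -> Ccvg eventually (fun M => sumC M (dterm w)) (eta_zeta w).
Proof.
  intros Hw. set (p := Re (Copp w)). set (q := Im (Copp w)).
  assert (Hp : p < 0) by (unfold p, Copp, Re in *; simpl; lra).
  assert (HK : 0 <= (Rabs p + Rabs q) / (- p)).
  { apply Rmult_le_pos. assert (0 <= Rabs p) by apply Rabs_pos. assert (0 <= Rabs q) by apply Rabs_pos. lra.
    left; apply Rinv_0_lt_compat; lra. }
  assert (E2 : forall i, INR (S (2 * i) + 1) = INR (2 * i + 2)) by (intros; f_equal; lia).
  split.
  - destruct (part_lim (ce p q) p ((Rabs p + Rabs q) / (- p)) Hp HK) as [L [H1 H2]].
    { intros; apply ce_diff; auto. } { intros; apply ce_bound. }
    replace (Re (eta_zeta w)) with L.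
    2: { symmetry. unfold eta_zeta. simpl. apply Series_lim. exact H2. }
    apply (is_lim_seq_incr_1 (fun M => Re (sumC M (dterm w))) L).
    eapply is_lim_seq_ext; [|exact H1]. intros n. rewrite Re_sumC.
    apply sum_n_ext. intros i. unfold dterm. rewrite E2. simpl. auto.
  - destruct (part_lim (se p q) p ((Rabs p + Rabs q) / (- p)) Hp HK) as [L [H1 H2]].
    { intros; apply se_diff; auto. } { intros; apply se_bound. }
    replace (Im (eta_zeta w)) with L.
    2: { symmetry. unfold eta_zeta. simpl. apply Series_lim. exact H2. }
    apply (is_lim_seq_incr_1 (fun M => Im (sumC M (dterm w))) L).
    eapply is_lim_seq_ext; [|exact H1]. intros n. rewrite Im_sumC.
    apply sum_n_ext. intros i. unfold dterm. rewrite E2. simpl. auto.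
Qed.


Definition Kf (w : C) : C := Cmult (eta_zeta w) (cGamma w).

Lemma eventually_proper : ProperFilter eventually.
Proof. apply eventually_filter. Qed.

Lemma hadamard n A (s : nat -> C) : psd n A -> (forall j, (j < n)%nat -> 0 < Re (s j)) ->
  psd n (fun j k => Cmult (A j k) (Kf (Cplus (s j) (Cconj (s k))))).
Proof.
  intros HA Hs.
  set (W := fun j k => Cplus (s j) (Cconj (s k))).
  assert (HW : forall j k, (j < n)%nat -> (k < n)%nat -> 0 < Re (W j k)).
  { intros j k Hj Hk. assert (H1 := Hs j Hj). assert (H2 := Hs k Hk). unfold W, Cplus, Cconj, Re in *; simpl in *. lra. }
  apply (psd_lim eventually (FF:=eventually_proper)) with
    (B := fun M j k => Cmult (A j k) (sumC M (fun i => Cmult (dterm (W j k) i) (cGamma (W j k))))).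
  - exists O. intros M _.
    apply psd_ext with (fun j k => sumC M (fun i => Cmult (A j k) (Cmult (dterm (W j k) i) (cGamma (W j k))))).
    { intros j k _ _. apply sumC_mult_l. }
    apply (psd_sum n M (fun i j k => Cmult (A j k) (Cmult (dterm (W j k) i) (cGamma (W j k))))).
    intros i Hi.
    set (a := INR (2 * i + 1)). set (b := INR (2 * i + 2)).
    assert (Ha : 0 < a) by (apply lt_0_INR; lia). assert (Hb : 0 < b) by (apply lt_0_INR; lia).
    assert (Hab : a < b) by (apply lt_INR; lia).
    apply (psd_lim FP (FF:=FP_proper)) with
      (B := fun ab j k => Cmult (A j k) (CInt (phi (W j k) a b) (fst ab) (snd ab))).
    + apply (FP_ev _ 1 1). lra. intros u v Hu Hv. simpl.
      apply (psd_int n A s (fun y => (exp (- (a * y)) - exp (- (b * y))) / y) u v); auto; try lra.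
      * intros y Hy. apply Rmult_le_pos. 2: (left; apply Rinv_0_lt_compat; lra).
        assert (exp (- (b * y)) < exp (- (a * y))) by (apply exp_increasing; nra). lra.
      * intros j k Hj Hk. eapply CisInt_ext. 2: apply phi_CisInt; auto; lra.
        intros y Hy. rewrite Rmin_left, Rmax_right in Hy by lra. apply phi_kernel. lra.
    + intros j k Hj Hk. apply (Ccvg_mult FP (FF:=filter_filter)). apply (Ccvg_const FP (FF:=filter_filter)).
      apply phi_Ccvg; auto.
  - intros j k Hj Hk.
    apply (Ccvg_ext_loc eventually (FF:=filter_filter)) with
      (fun M => Cmult (A j k) (Cmult (sumC M (dterm (W j k))) (cGamma (W j k)))).
    { exists O. intros M _. f_equal. apply sumC_mult_r. }
    apply (Ccvg_mult eventually (FF:=filter_filter)). apply (Ccvg_const eventually (FF:=filter_filter)).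
    apply (Ccvg_mult eventually (FF:=filter_filter)). apply eta_lim. apply HW; auto.
    apply (Ccvg_const eventually (FF:=filter_filter)).
Qed.

Theorem mainTheorem8 (m n : nat) (s : nat -> nat -> C)
  (hs : forall j l, (j < n)%nat -> (l < m)%nat -> 0 < Re (s j l)) :
  psd n (fun j k =>
    prodC m (fun l =>
      let w := Cplus (s j l) (Cconj (s k l)) in
      Cmult (eta_zeta w) (cGamma w))).
Proof.
  induction m.
  - simpl. apply psd_ones.
  - simpl. apply (hadamard n _ (fun j => s j m)).
    + apply IHm. intros; apply hs; lia.
    + intros; apply hs; lia.
Qed.
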